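(* Let $L\in\mathbb{R}^{m\times m}$ satisfy $\|\mathrm{e}^{\omega L}\|_\infty\le1$ for all $\omega>0$, and let $\rho>0$ and $f$ satisfy: there exists $\omega_0^+>0$ with $|\xi+\omega f(\xi)|\le\rho$ for all $\xi\in[-\rho,\rho]$, $\omega\in(0,\omega_0^+]$, and there exists $\omega_0^->0$ with $|\xi-\omega f(\xi)|\le\rho$ for all $\xi\in[-\rho,\rho]$, $\omega\in(0,\omega_0^-]$. Consider the classical fourth-order integrating factor Runge--Kutta scheme $$u^{(1)}=\mathrm{e}^{\frac{\tau}{2}L}u^n+\tfrac{\tau}{2}\mathrm{e}^{\frac{\tau}{2}L}f(u^n),\qquad u^{(2)}=\mathrm{e}^{\frac{\tau}{2}L}u^n+\tfrac{\tau}{2}f(u^{(1)}),$$ $$u^{(3)}=\mathrm{e}^{\tau L}u^n+\tau\,\mathrm{e}^{\frac{\tau}{2}L}f(u^{(2)}),$$ $$u^{n+1}=\mathrm{e}^{\tau L}u^n+\tau\Big(\tfrac16\mathrm{e}^{\tau L}f(u^n)+\tfrac13\mathrm{e}^{\frac{\tau}{2}L}f(u^{(1)})+\tfrac13\mathrm{e}^{\frac{\tau}{2}L}f(u^{(2)})+\tfrac16 f(u^{(3)})\Big).$$ If $\|u^n\|_\infty\le\rho$ and $0<\tau\le\frac23\min\{\omega_0^+,\omega_0^-\}$, then $\|u^{n+1}\|_\infty\le\rho$.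
   Context: $\|\cdot\|_\infty$ is the vector $\infty$-norm and induced matrix norm; $f(u)$ for a vector $u$ is applied componentwise. *)

(* Defs.v *)
From HB Require Import structures.
From mathcomp Require Import all_boot all_order all_algebra.
From mathcomp Require Import all_classical all_reals all_analysis.
Set Implicit Arguments. Unset Strict Implicit. Unset Printing Implicit Defensive.
Import Order.TTheory GRing.Theory Num.Theory.
Local Open Scope ring_scope.
Local Open Scope classical_set_scope.

Definition expmx (R : realType) (m : nat) (A : 'M[R]_m) : 'M[R]_m :=
  lim ((series (fun k : nat => (k`!%:R)^-1 *: (A ^+ k))) @ \oo).

Definition vnorm_inf (R : realType) (m : nat) (u : 'cV[R]_m) : R :=
  \big[Num.max/0]_(i < m) `|u i 0|.

Definition fvec (R : realType) (m : nat) (f : R -> R) (u : 'cV[R]_m) : 'cV[R]_m :=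
  map_mx f u.

Definition IFRK4_step (R : realType) (m : nat) (L : 'M[R]_m) (f : R -> R)
  (tau : R) (u : 'cV[R]_m) : 'cV[R]_m :=
  let Eh := expmx ((tau / 2) *: L) in
  let E := expmx (tau *: L) in
  let u1 := Eh *m u + (tau / 2) *: (Eh *m fvec f u) in
  let u2 := Eh *m u + (tau / 2) *: fvec f u1 in
  let u3 := E *m u + tau *: (Eh *m fvec f u2) in
  E *m u + tau *: ((6%:R)^-1 *: (E *m fvec f u)
                   + (3%:R)^-1 *: (Eh *m fvec f u1)
                   + (3%:R)^-1 *: (Eh *m fvec f u2)
                   + (6%:R)^-1 *: fvec f u3).

(* Main.v *)
Require Import Defs.
From HB Require Import structures.
From mathcomp Require Import all_boot all_order all_algebra.
From mathcomp Require Import all_classical all_reals all_analysis.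
From mathcomp Require Import ring lra.
Import Order.TTheory GRing.Theory Num.Theory.
Import numFieldNormedType.Exports.
Local Open Scope ring_scope.
Local Open Scope classical_set_scope.

Section Norms.
Variable R : realType.

Lemma mxn_entry p q (A : 'M[R]_(p, q)) i j : `|A i j| <= `|A|.
Proof.
by rewrite [leRHS]/Num.Def.normr /= mx_normrE; apply/bigmax_geP; right => /=; exists (i, j).
Qed.

Lemma mxn_le p q (A : 'M[R]_(p, q)) e : 0 <= e -> (forall i j, `|A i j| <= e) -> `|A| <= e.
Proof.
move=> e0 H; rewrite /Num.Def.normr/= mx_normrE (bigmax_le _ e0)//= => -[i j] _; exact: H.
Qed.

Lemma mxn_mul p q r (A : 'M[R]_(p, q)) (B : 'M[R]_(q, r)) :
  `|A *m B| <= q%:R * `|A| * `|B|.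
Proof.
apply: mxn_le; first by rewrite !mulr_ge0.
move=> i j; rewrite mxE (le_trans (ler_norm_sum _ _ _))//.
rewrite (@le_trans _ _ (\sum_(k < q) `|A| * `|B|))//.
  apply: ler_sum => k _; rewrite normrM ler_pM//; exact: mxn_entry.
by rewrite sumr_const card_ord -mulrA mulr_natl.
Qed.

Lemma mxn_one m : `|(1 : 'M[R]_m)| <= 1.
Proof.
apply: mxn_le => // i j; rewrite mxE; case: (i == j) => /=; by rewrite ?normr1 ?normr0.
Qed.

Lemma mxn_exp m (A : 'M[R]_m) k : `|A ^+ k| <= (m%:R * `|A|) ^+ k.
Proof.
elim: k => [|k IH]; first by rewrite !expr0 mxn_one.
rewrite exprS -mulmxE (le_trans (@mxn_mul _ _ _ A (A ^+ k))) // exprS.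
by rewrite ler_pM // mulr_ge0.
Qed.

End Norms.

HB.instance Definition _ (R : realType) (m n : nat) := Complete.on 'M[R]_(m, n).

Section Ser.
Variable R : realType.

Definition eS m (A : 'M[R]_m) := fun k : nat => (k`!%:R : R)^-1 *: A ^+ k.
Arguments eS {m}.

Lemma normed_cvg_mx m (u_ : ('M[R]_m)^nat) :
  cvgn [normed series u_] -> cvgn (series u_).
Proof. exact: normed_cvg. Qed.

Lemma cvg_eS m (A : 'M[R]_m) : cvgn (series (eS A)).
Proof.
apply: normed_cvg_mx.
have c0 : 0 <= m%:R * `|A| by rewrite mulr_ge0.
have -> : [normed series (eS A)] = series (fun k => `|eS A k|) by [].
apply: (@series_le_cvg _ _ (exp_coeff (m%:R * `|A|))) => //.
- by move=> k; exact: exp_coeff_ge0.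
- move=> k; rewrite /eS normrZ ger0_norm ?invr_ge0 // /exp_coeff /= mulrC.
  by rewrite ler_wpM2r ?invr_ge0 // mxn_exp.
- exact: is_cvg_series_exp_coeff.
Qed.

Lemma expmxE m (A : 'M[R]_m) : series (eS A) @ \oo --> expmx A.
Proof. have := @cvg_eS m A; move/cvg_ex => [l hl]. rewrite /expmx. rewrite (cvg_lim _ hl) //. Qed.

End Ser.

Lemma tri (V : zmodType) N (G : nat -> nat -> V) :
  \sum_(0 <= j < N) \sum_(0 <= k < N | ~~ (N <= j + k)%N) G j k =
  \sum_(0 <= n < N) \sum_(0 <= j < n.+1) G j (n - j)%N.
Proof.
transitivity (\sum_(0 <= j < N) \sum_(0 <= n < N) (if (j <= n)%N then G j (n - j)%N else 0)).
  apply: eq_big_nat => j /andP[_ jN].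
  rewrite -big_mkcond /=.
  have -> : \sum_(0 <= i < N | (j <= i)%N) G j (i - j)%N = \sum_(j <= i < N) G j (i - j)%N by rewrite (big_nat_widenl j 0).
  rewrite -[X in \sum_(X <= _ < _) _]add0n big_addn.
  under [RHS]eq_bigr do rewrite addnK.
  rewrite [RHS](big_nat_widen _ _ N) ?leq_subr //.
  by apply: eq_bigl => k; rewrite ltn_subRL -ltnNge.
rewrite exchange_big_nat; apply: eq_big_nat => n /andP[_ nN].
by rewrite -big_mkcond /= [RHS](big_nat_widen _ _ N) //; apply: eq_bigl => i; rewrite ltnS.
Qed.

Lemma coefid (R : numFieldType) n :
  (n`!%:R : R)^-1 * 2%:R ^+ n =
  \sum_(0 <= j < n.+1) ((j`!%:R : R)^-1 * ((n - j)`!%:R)^-1).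
Proof.
have -> : (2%:R : R) ^+ n = \sum_(j < n.+1) 'C(n, j)%:R.
  by rewrite -[2%:R]/(1 + 1 : R) exprD1n; apply: eq_bigr => j _; rewrite expr1n.
rewrite mulr_sumr big_mkord; apply: eq_bigr => -[j /=]; rewrite ltnS => jn _.
have h := bin_fact jn.
have f0 : forall k, (k`!%:R : R) != 0 by move=> k; rewrite pnatr_eq0 -lt0n fact_gt0.
have : ('C(n, j)%:R : R) = n`!%:R / (j`!%:R * (n - j)`!%:R).
  by rewrite -h natrM natrM mulfK // mulf_neq0.
move=> ->; field; rewrite ?f0 //.
Qed.

Lemma sqid (R : numFieldType) (V : algType R) (x : V) N :
  (\sum_(0 <= k < N) (k`!%:R : R)^-1 *: x ^+ k) * (\sum_(0 <= k < N) (k`!%:R : R)^-1 *: x ^+ k)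
   - \sum_(0 <= k < N) (k`!%:R : R)^-1 *: (2%:R *: x) ^+ k =
  \sum_(0 <= j < N) \sum_(0 <= k < N | (N <= j + k)%N)
     ((j`!%:R : R)^-1 * (k`!%:R)^-1) *: x ^+ (j + k).
Proof.
rewrite mulr_suml.
under eq_bigr => j _ do rewrite mulr_sumr.
under eq_bigr => j _ do under eq_bigr => k _ do rewrite -scalerAl -scalerAr scalerA -exprD.
under eq_bigr => j _ do rewrite (bigID (fun k => (N <= j + k)%N)) /=.
rewrite big_split /=.
suff -> : \sum_(0 <= i < N) \sum_(0 <= i0 < N | ~~ (N <= i + i0)%N)
    (((i`!%:R)^-1 * (i0`!%:R)^-1) *: x ^+ (i + i0)) =
    \sum_(0 <= k < N) (k`!%:R : R)^-1 *: (2%:R *: x) ^+ k by rewrite addrK.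
rewrite (@tri _ N (fun j k => ((j`!%:R : R)^-1 * (k`!%:R)^-1) *: x ^+ (j + k))).
apply: eq_big_nat => n _; rewrite exprZn scalerA coefid scaler_suml.
by apply: eq_big_nat => j /andP[_ jn]; rewrite subnKC.
Qed.

Lemma mx_exprZn (R : numFieldType) m (a : R) (A : 'M[R]_m) n :
  (a *: A) ^+ n = a ^+ n *: A ^+ n.
Proof.
elim: n => [|n IH]; first by rewrite !expr0 scale1r.
by rewrite !exprS IH -!mulmxE -scalemxAl -scalemxAr scalerA.
Qed.

Lemma sqidmx (R : numFieldType) m (x : 'M[R]_m) N :
  (\sum_(0 <= k < N) (k`!%:R : R)^-1 *: x ^+ k) * (\sum_(0 <= k < N) (k`!%:R : R)^-1 *: x ^+ k)
   - \sum_(0 <= k < N) (k`!%:R : R)^-1 *: (2%:R *: x) ^+ k =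
  \sum_(0 <= j < N) \sum_(0 <= k < N | (N <= j + k)%N)
     ((j`!%:R : R)^-1 * (k`!%:R)^-1) *: x ^+ (j + k).
Proof.
rewrite mulr_suml.
under eq_bigr => j _ do rewrite mulr_sumr.
under eq_bigr => j _ do under eq_bigr => k _ do rewrite -!mulmxE -scalemxAl -scalemxAr scalerA mulmxE -exprD.
under eq_bigr => j _ do rewrite (bigID (fun k => (N <= j + k)%N)) /=.
rewrite big_split /=.
suff -> : \sum_(0 <= i < N) \sum_(0 <= i0 < N | ~~ (N <= i + i0)%N)
    (((i`!%:R)^-1 * (i0`!%:R)^-1) *: x ^+ (i + i0)) =
    \sum_(0 <= k < N) (k`!%:R : R)^-1 *: (2%:R *: x) ^+ k by rewrite addrK.
rewrite (@tri _ N (fun j k => ((j`!%:R : R)^-1 * (k`!%:R)^-1) *: x ^+ (j + k))).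
apply: eq_big_nat => n _; rewrite mx_exprZn scalerA coefid scaler_suml.
by apply: eq_big_nat => j /andP[_ jn]; rewrite subnKC.
Qed.


Section ExpLaw.
Variable R : realType.

Lemma zero_bound m (u : nat -> 'M[R]_m) (t : nat -> R) :
  (forall n, `|u n| <= t n) -> t @ \oo --> 0 -> u @ \oo --> 0.
Proof.
move=> hb ht; apply: norm_cvg0.
apply: (@squeeze_cvgr _ _ _ _ (fun=> 0) t) => //; last exact: cvg_cst.
by near=> n; rewrite normr_ge0 hb.
Unshelve. all: by end_near. Qed.

Lemma cvg_sq m (X : nat -> 'M[R]_m) (x : 'M[R]_m) :
  X @ \oo --> x -> (fun n => X n * X n) @ \oo --> x * x.
Proof.
move=> hX; apply/subr_cvg0.
have h0 : (fun n => X n - x) @ \oo --> 0 by apply/subr_cvg0.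
have hd : (fun n => `|X n - x|) @ \oo --> 0.
  have := cvg_norm h0; rewrite normr0; apply; exact: _.
apply: (@zero_bound _ _ (fun n => m%:R * (`|X n - x| * `|X n - x| + 2%:R * `|x| * `|X n - x|))).
  move=> n; set Y := X n - x.
  have -> : X n * X n - x * x = Y * Y + (Y * x + x * Y).
    have eX : X n = Y + x by rewrite /Y subrK.
    by rewrite eX mulrDl !mulrDr addrA addrK -addrA.
  rewrite (le_trans (ler_normD _ _)) // (le_trans (lerD (lexx _) (ler_normD _ _))) //.
  rewrite -!mulmxE.
  have h1 := @mxn_mul R _ _ _ Y Y; have h2 := @mxn_mul R _ _ _ Y x; have h3 := @mxn_mul R _ _ _ x Y.
  have := normr_ge0 Y; have := normr_ge0 x.
  lra.
have -> : 0 = m%:R * (0 * 0 + 2%:R * `|x| * 0) :> R by rewrite !(mulr0, mul0r, addr0).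
apply: cvgMl_tmp; apply: cvgD; first exact: (cvgM hd hd).
exact: cvgMl_tmp.
Qed.


Lemma expmx2 m (B : 'M[R]_m) : expmx (2%:R *: B) = expmx B * expmx B.
Proof.
set c := m%:R * `|B|.
have c0 : 0 <= c by rewrite mulr_ge0.
have hD := cvgB (@cvg_sq _ _ _ (@expmxE _ _ B)) (@expmxE _ _ (2%:R *: B)).
have hsc : forall y : R, series (exp_coeff y) @ \oo --> expR y.
  move=> y; have := is_cvg_series_exp_coeff y; move/cvg_ex => [l hl].
  by rewrite /expR (cvg_lim _ hl).
have ht := cvgB (cvgM (hsc c) (hsc c)) (hsc (2%:R * c)).
have e0 : expR c * expR c - expR (2%:R * c) = 0.
  by rewrite mulr_natl mulr2n expRD subrr.
have {}hD := hD ltac:(typeclasses eauto).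
have {}ht := ht ltac:(typeclasses eauto) ltac:(typeclasses eauto).
rewrite e0 in ht.
have hb : forall n, `|series (@eS R m B) n * series (@eS R m B) n - series (@eS R m (2%:R *: B)) n| <=
   series (exp_coeff c) n * series (exp_coeff c) n - series (exp_coeff (2%:R * c)) n.
  move=> n; rewrite /series /= /eS (@sqidmx R m B n).
  have E : (\sum_(0 <= k < n) (k`!%:R : R)^-1 * c ^+ k) * (\sum_(0 <= k < n) (k`!%:R : R)^-1 * c ^+ k)
     - \sum_(0 <= k < n) (k`!%:R : R)^-1 * (2%:R * c) ^+ k =
     \sum_(0 <= j < n) \sum_(0 <= k < n | (n <= j + k)%N)
       ((j`!%:R : R)^-1 * (k`!%:R)^-1) * c ^+ (j + k) := @sqid R R^o c n.
  rewrite (le_trans (ler_norm_sum _ _ _)) //.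
  apply: (@le_trans _ _ (\sum_(0 <= j < n) \sum_(0 <= k < n | (n <= j + k)%N)
       ((j`!%:R : R)^-1 * (k`!%:R)^-1) * c ^+ (j + k))).
    apply: ler_sum => j _; rewrite (le_trans (ler_norm_sum _ _ _)) //.
    apply: ler_sum => k _; rewrite normrZ ger0_norm ?mulr_ge0 ?invr_ge0 //.
    by rewrite ler_wpM2l ?mulr_ge0 ?invr_ge0 // mxn_exp.
  rewrite -E le_eqVlt; apply/orP; left; apply/eqP.
  by congr (_ * _ - _); apply: eq_bigr => k _; rewrite /exp_coeff /= mulrC.
have hz : ((fun n => series (@eS R m B) n * series (@eS R m B) n) - series (@eS R m (2%:R *: B))) @ \oo --> 0 := @zero_bound m _ _ hb ht.
have := @cvg_unique _ _ _ _ _ _ hD hz.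
by move=> h; apply/esym/eqP; rewrite -subr_eq0 -h.
Qed.

End ExpLaw.

Section Vn.
Variable R : realType.

Lemma vnP m (v : 'cV[R]_m) r : 0 <= r ->
  (vnorm_inf v <= r) <-> (forall i, `|v i 0| <= r).
Proof.
move=> r0; split.
  move=> h i; apply: le_trans h; rewrite /vnorm_inf.
  by apply/bigmax_geP; right; exists i.
by move=> h; rewrite /vnorm_inf; apply: bigmax_le.
Qed.

Lemma cvx4 m (x1 x2 x3 x4 : 'cV[R]_m) a1 a2 a3 a4 r : 0 <= r ->
  vnorm_inf x1 <= r -> vnorm_inf x2 <= r -> vnorm_inf x3 <= r -> vnorm_inf x4 <= r ->
  0 <= a1 -> 0 <= a2 -> 0 <= a3 -> 0 <= a4 -> a1 + a2 + a3 + a4 = 1 ->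
  vnorm_inf (a1 *: x1 + a2 *: x2 + a3 *: x3 + a4 *: x4) <= r.
Proof.
move=> r0 /(@vnP _ _ _ r0) h1 /(@vnP _ _ _ r0) h2 /(@vnP _ _ _ r0) h3 /(@vnP _ _ _ r0) h4 p1 p2 p3 p4 s.
apply/vnP => // i; rewrite !mxE.
have k1 := ler_wpM2l p1 (h1 i); have k2 := ler_wpM2l p2 (h2 i).
have k3 := ler_wpM2l p3 (h3 i); have k4 := ler_wpM2l p4 (h4 i).
have t := ler_normD (a1 * x1 i 0 + a2 * x2 i 0 + a3 * x3 i 0) (a4 * x4 i 0).
have t2 := ler_normD (a1 * x1 i 0 + a2 * x2 i 0) (a3 * x3 i 0).
have t3 := ler_normD (a1 * x1 i 0) (a2 * x2 i 0).
rewrite !normrM ?(ger0_norm p1) ?(ger0_norm p2) ?(ger0_norm p3) ?(ger0_norm p4) in t t2 t3.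
have e : a1 * r + a2 * r + a3 * r + a4 * r = r by rewrite -!mulrDl s mul1r.
lra.
Qed.

End Vn.

Local Close Scope classical_set_scope.

Theorem mainTheorem6 (R : realType) (m : nat) (L : 'M[R]_m) (f : R -> R)
  (rho w0p w0m tau : R) (u : 'cV[R]_m) :
  (forall w : R, 0 < w -> forall x : 'cV[R]_m,
      vnorm_inf (expmx (w *: L) *m x) <= vnorm_inf x) ->
  0 < rho ->
  0 < w0p ->
  (forall xi w : R, -rho <= xi <= rho -> 0 < w <= w0p -> `|xi + w * f xi| <= rho) ->
  0 < w0m ->
  (forall xi w : R, -rho <= xi <= rho -> 0 < w <= w0m -> `|xi - w * f xi| <= rho) ->
  vnorm_inf u <= rho ->
  0 < tau <= (2%:R / 3%:R) * Num.min w0p w0m ->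
  vnorm_inf (IFRK4_step L f tau u) <= rho.
Proof.
move=> hL rho0 wp0 hp wm0 hm hu /andP[tau0 htau].
have hmin1 : Num.min w0p w0m <= w0p by rewrite ge_min lexx.
have hmin2 : Num.min w0p w0m <= w0m by rewrite ge_min lexx orbT.
have r0 : 0 <= rho by exact: ltW.
have PE : forall (w : R) (v : 'cV[R]_m), 0 < w -> vnorm_inf v <= rho -> vnorm_inf (expmx (w *: L) *m v) <= rho.
  by move=> w v w0 hv; exact: le_trans (hL w w0 v) hv.
have Pp : forall (w : R) (v : 'cV[R]_m), 0 < w -> w <= w0p -> vnorm_inf v <= rho ->
    vnorm_inf (v + w *: fvec f v) <= rho.
  move=> w v w0 ww hv. apply: (proj2 (@vnP _ _ _ _ r0)) => i; rewrite !mxE; apply: hp.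
    by rewrite -ler_norml; exact: (proj1 (@vnP _ _ _ _ r0) hv i).
  by rewrite w0 ww.
have Pm : forall (w : R) (v : 'cV[R]_m), 0 < w -> w <= w0m -> vnorm_inf v <= rho ->
    vnorm_inf (v - w *: fvec f v) <= rho.
  move=> w v w0 ww hv; apply: (proj2 (@vnP _ _ _ _ r0)) => i; rewrite !mxE; apply: hm.
    by rewrite -ler_norml; exact: (proj1 (@vnP _ _ _ _ r0) hv i).
  by rewrite w0 ww.
set H := expmx ((tau / 2) *: L).
set E := expmx (tau *: L).
have hE : E = H *m H.
  by rewrite /E /H mulmxE -expmx2 scalerA mulrC divfK ?pnatr_eq0.
have PH : forall v : 'cV[R]_m, vnorm_inf v <= rho -> vnorm_inf (H *m v) <= rho.
  by move=> v; apply: PE; rewrite divr_gt0.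
have PEE : forall v : 'cV[R]_m, vnorm_inf v <= rho -> vnorm_inf (E *m v) <= rho.
  by move=> v; apply: PE.
rewrite /IFRK4_step /= -/H -/E.
set u1 := H *m u + (tau / 2) *: (H *m fvec f u).
set u2 := H *m u + (tau / 2) *: fvec f u1.
set u3 := E *m u + tau *: (H *m fvec f u2).
have P1 : vnorm_inf u1 <= rho.
  have -> : u1 = H *m (u + (tau / 2) *: fvec f u) by rewrite mulmxDr -scalemxAr.
  apply: PH; apply: Pp => //; [by rewrite divr_gt0 | lra].
have P2 : vnorm_inf u2 <= rho.
  have -> : u2 = 2%:R^-1 *: (u1 + tau *: fvec f u1) + 2%:R^-1 *: (H *m (u - (tau / 2) *: fvec f u))
                 + 0 *: u + 0 *: u.
    rewrite /u2 /u1 mulmxDr mulmxN -scalemxAr.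
    by apply/matrixP => i j; rewrite !mxE; field.
  apply: cvx4 => //; try lra.
    by apply: Pp => //; lra.
  by apply: PH; apply: Pm => //; [rewrite divr_gt0 | lra].
have P3 : vnorm_inf u3 <= rho.
  have -> : u3 = 9%:R^-1 *: (E *m (u - tau *: fvec f u))
      + (2%:R / 3%:R) *: (H *m (u2 + (3%:R / 2%:R * tau) *: fvec f u2))
      + (2%:R / 9%:R) *: (H *m (u1 - (3%:R / 2%:R * tau) *: fvec f u1)) + 0 *: u.
    rewrite /u3 ?mulmxDr ?mulmxN -?scalemxAr.
    rewrite /u2 /u1 ?mulmxDr -?scalemxAr ?mulmxN -?scalemxAr ?mulmxA -?hE.
    by apply/matrixP => i j; rewrite !mxE; field.
  apply: cvx4 => //; try lra.
  - by apply: PEE; apply: Pm => //; lra.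
  - by apply: PH; apply: Pp => //; lra.
  - by apply: PH; apply: Pm => //; lra.
have eF : E *m u + tau *: ((6%:R)^-1 *: (E *m fvec f u) + (3%:R)^-1 *: (H *m fvec f u1)
      + (3%:R)^-1 *: (H *m fvec f u2) + (6%:R)^-1 *: fvec f u3) =
    6%:R^-1 *: (u3 + tau *: fvec f u3) + 3%:R^-1 *: (H *m (u2 + (tau / 2) *: fvec f u2))
    + 3%:R^-1 *: (H *m (u1 + (tau / 2) *: fvec f u1)) + 6%:R^-1 *: (E *m u).
  rewrite /u3 ?mulmxDr ?mulmxN -?scalemxAr.
  rewrite /u2 /u1 ?mulmxDr -?scalemxAr ?mulmxN -?scalemxAr ?mulmxA -?hE.
  by apply/matrixP => i j; rewrite !mxE; field.
rewrite eF; apply: cvx4 => //; try lra.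
- by apply: Pp => //; lra.
- by apply: PH; apply: Pp => //; [rewrite divr_gt0 | lra].
- by apply: PH; apply: Pp => //; [rewrite divr_gt0 | lra].
- by apply: PEE.
Qed.
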